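(* Let $(T,[\cdot,\cdot],[\cdot,\cdot,\cdot],\alpha)$ be a Hom-Lie-Yamaguti algebra, let $0\to\mathfrak{h}\xrightarrow{i}\hat T\xrightarrow{p}T\to0$ be an abelian extension of $T$ by $(\mathfrak{h},\beta)$ (with $\mathfrak{h}$ identified with $i(\mathfrak{h})$), and let $\sigma:T\to\hat T$ be a section. Define $$\nu(x_1,x_2)=[\sigma(x_1),\sigma(x_2)]_{\hat T}-\sigma([x_1,x_2]),\qquad \omega(x_1,x_2,x_3)=[\sigma(x_1),\sigma(x_2),\sigma(x_3)]_{\hat T}-\sigma([x_1,x_2,x_3]).$$ Then $\nu$ and $\omega$ take values in $\mathfrak{h}$, and $(\nu,\omega)$ is a (2,3)-cocycle of $T$ with coefficients in $\mathfrak{h}$ with respect to the representation $(\rho,D,\theta)$ given by $\rho(x_1)(u)=[\sigma(x_1),u]_{\hat T}$, $D(x_1,x_2)(u)=[\sigma(x_1),\sigma(x_2),u]_{\hat T}$, $\theta(x_1,x_2)(u)=[u,\sigma(x_1),\sigma(x_2)]_{\hat T}$.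
   Context: Throughout, vector spaces are over an algebraically closed field $\mathbb{K}$ of characteristic different from 2 and 3. A Hom-Lie-Yamaguti algebra (HLYA) is a vector space $T$ with a linear map $\alpha:T\to T$, a bilinear map $[\cdot,\cdot]$ and a trilinear map $[\cdot,\cdot,\cdot]$ on $T$ such that for all $x_i,y_i\in T$: (HLY01) $\alpha([x_1,x_2])=[\alpha(x_1),\alpha(x_2)]$; (HLY02) $\alpha([x_1,x_2,x_3])=[\alpha(x_1),\alpha(x_2),\alpha(x_3)]$; (HLY1) $[x_1,x_2]+[x_2,x_1]=0$; (HLY2) $[x_1,x_2,x_3]+[x_2,x_1,x_3]=0$; (HLY3) $\sum_{\mathrm{cyc}(x_1,x_2,x_3)}([[x_1,x_2],\alpha(x_3)]+[x_1,x_2,x_3])=0$; (HLY4) $[[x_1,x_2],\alpha(x_3),\alpha(y_1)]+[[x_2,x_3],\alpha(x_1),\alpha(y_1)]+[[x_3,x_1],\alpha(x_2),\alpha(y_1)]=0$; (HLY5) $[\alpha(x_1),\alpha(x_2),[y_1,y_2]]=[[x_1,x_2,y_1],\alpha^2(y_2)]+[\alpha^2(y_1),[x_1,x_2,y_2]]$; (HLY6) $[\alpha^2(x_1),\alpha^2(x_2),[y_1,y_2,y_3]]=[[x_1,x_2,y_1],\alpha^2(y_2),\alpha^2(y_3)]+[\alpha^2(y_1),[x_1,x_2,y_2],\alpha^2(y_3)]+[\alpha^2(y_1),\alpha^2(y_2),[x_1,x_2,y_3]]$. A homomorphism of HLYAs $\varphi:(T,\alpha)\to(T',\alpha')$ is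 a linear map with $\varphi\circ\alpha=\alpha'\circ\varphi$ preserving both brackets. An extension of $(T,\alpha)$ by a HLYA $(\mathfrak{h},\beta)$ is a HLYA $(\hat T,[\cdot,\cdot]_{\hat T},[\cdot,\cdot,\cdot]_{\hat T},\hat\alpha)$ with HLYA homomorphisms $i:\mathfrak{h}\to\hat T$ (injective) and $p:\hat T\to T$ (surjective), $\mathrm{Im}(i)=\mathrm{Ker}(p)$. It is abelian if $[u,v]_{\hat T}=0$ and $[u,v,z]_{\hat T}=[u,z,v]_{\hat T}=[z,u,v]_{\hat T}=0$ for all $u,v\in i(\mathfrak{h})$, $z\in\hat T$. A section is a linear map $\sigma:T\to\hat T$ with $p\circ\sigma=\mathrm{id}_T$ and $\hat\alpha\circ\sigma=\sigma\circ\alpha$. (The maps $\rho,D,\theta$ defined in the claim form a representation of $(T,\alpha)$ on $(\mathfrak{h},\beta)$.) For a representation $(\rho,D,\theta)$ of $(T,\alpha)$ on a Hom-vector space $(V,\beta)$, a (2,3)-cocycle is a pair of a bilinear map $\nu:T\times T\to V$ and a trilinear map $\omega:T^3\to V$ with $\nu(x_1,x_2)=-\nu(x_2,x_1)$, $\omega(x_1,x_2,x_3)=-\omega(x_2,x_1,x_3)$ and, for all $x_i,y_i\in T$: (CC01) $\nu(\alpha(x_1),\alpha(x_2))=\beta(\nu(x_1,x_2))$; (CC02) $\omega(\alpha(x_1),\alpha(x_2),\alpha(x_3))=\beta(\omega(x_1,x_2,x_3))$; (CC1) $\sum_{\mathrm{cyc}(x_1,x_2,x_3)}\big(\omega(x_1,x_2,x_3)-\rho(\alpha(x_1))\nu(x_2,x_3)+\nu([x_1,x_2],\alpha(x_3))\big)=0$;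 (CC2) $\sum_{\mathrm{cyc}(x_1,x_2,x_3)}\big(\theta(\alpha(x_1),\alpha(y_1))\nu(x_2,x_3)+\omega([x_1,x_2],\alpha(x_3),\alpha(y_1))\big)=0$; (CC3) $\omega(\alpha(x_1),\alpha(x_2),[y_1,y_2])+D(\alpha(x_1),\alpha(x_2))\nu(y_1,y_2)=\nu([x_1,x_2,y_1],\alpha^2(y_2))+\nu(\alpha^2(y_1),[x_1,x_2,y_2])+\rho(\alpha^2(y_1))\omega(x_1,x_2,y_2)-\rho(\alpha^2(y_2))\omega(x_1,x_2,y_1)$; (CC4) $\omega(\alpha^2(x_1),\alpha^2(x_2),[y_1,y_2,y_3])+D(\alpha^2(x_1),\alpha^2(x_2))\omega(y_1,y_2,y_3)=\omega([x_1,x_2,y_1],\alpha^2(y_2),\alpha^2(y_3))+\omega(\alpha^2(y_1),[x_1,x_2,y_2],\alpha^2(y_3))+\omega(\alpha^2(y_1),\alpha^2(y_2),[x_1,x_2,y_3])+\theta(\alpha^2(y_2),\alpha^2(y_3))\omega(x_1,x_2,y_1)-\theta(\alpha^2(y_1),\alpha^2(y_3))\omega(x_1,x_2,y_2)+D(\alpha^2(y_1),\alpha^2(y_2))\omega(x_1,x_2,y_3)$. *)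

(* Defs.v *)
From HB Require Import structures.
From mathcomp Require Import all_boot all_order all_algebra.
Set Implicit Arguments. Unset Strict Implicit. Unset Printing Implicit Defensive.
Import GRing.Theory.
Local Open Scope ring_scope.

Section HLY.
Variable K : fieldType.

Definition lin_map (U V : lmodType K) (f : U -> V) : Prop :=
  forall (a : K) (x y : U), f (a *: x + y) = a *: f x + f y.

Definition bilin (U V : lmodType K) (f : U -> U -> V) : Prop :=
  (forall y, lin_map (fun x => f x y)) /\ (forall x, lin_map (f x)).

Definition trilin (U V : lmodType K) (f : U -> U -> U -> V) : Prop :=
  (forall y z, lin_map (fun x => f x y z)) /\
  (forall x z, lin_map (fun y => f x y z)) /\
  (forall x y, lin_map (f x y)).

Definition HLYA (T : lmodType K) (br : T -> T -> T) (tr : T -> T -> T -> T)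
  (al : T -> T) : Prop :=
  lin_map al /\ bilin br /\ trilin tr /\
   (forall x1 x2, al (br x1 x2) = br (al x1) (al x2)) /\
   (forall x1 x2 x3, al (tr x1 x2 x3) = tr (al x1) (al x2) (al x3)) /\
   (forall x1 x2, br x1 x2 + br x2 x1 = 0) /\
   (forall x1 x2 x3, tr x1 x2 x3 + tr x2 x1 x3 = 0) /\
   (forall x1 x2 x3,
       (br (br x1 x2) (al x3) + tr x1 x2 x3)
     + (br (br x2 x3) (al x1) + tr x2 x3 x1)
     + (br (br x3 x1) (al x2) + tr x3 x1 x2) = 0) /\
   (forall x1 x2 x3 y1,
       tr (br x1 x2) (al x3) (al y1) + tr (br x2 x3) (al x1) (al y1)
     + tr (br x3 x1) (al x2) (al y1) = 0) /\
   (forall x1 x2 y1 y2,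
       tr (al x1) (al x2) (br y1 y2)
     = br (tr x1 x2 y1) (al (al y2)) + br (al (al y1)) (tr x1 x2 y2)) /\
   (forall x1 x2 y1 y2 y3,
       tr (al (al x1)) (al (al x2)) (tr y1 y2 y3)
     = tr (tr x1 x2 y1) (al (al y2)) (al (al y3))
     + tr (al (al y1)) (tr x1 x2 y2) (al (al y3))
     + tr (al (al y1)) (al (al y2)) (tr x1 x2 y3)).

Definition HLYA_hom (T T' : lmodType K)
  (br : T -> T -> T) (tr : T -> T -> T -> T) (al : T -> T)
  (br' : T' -> T' -> T') (tr' : T' -> T' -> T' -> T') (al' : T' -> T')
  (phi : T -> T') : Prop :=
  [/\ lin_map phi,
      (forall x, phi (al x) = al' (phi x)),
      (forall x1 x2, phi (br x1 x2) = br' (phi x1) (phi x2)) &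
      (forall x1 x2 x3, phi (tr x1 x2 x3) = tr' (phi x1) (phi x2) (phi x3))].

Definition HLYA_extension (T H Th : lmodType K)
  (br : T -> T -> T) (tr : T -> T -> T -> T) (al : T -> T)
  (brh : H -> H -> H) (trh : H -> H -> H -> H) (be : H -> H)
  (brt : Th -> Th -> Th) (trt : Th -> Th -> Th -> Th) (alt : Th -> Th)
  (i : H -> Th) (p : Th -> T) : Prop :=
  HLYA brh trh be /\ HLYA brt trt alt /\
  HLYA_hom brh trh be brt trt alt i /\
  HLYA_hom brt trt alt br tr al p /\
  injective i /\
  (forall x : T, exists y : Th, p y = x) /\
  (forall y : Th, (exists u : H, i u = y) <-> p y = 0).

Definition abelian_ext (H Th : lmodType K)
  (brt : Th -> Th -> Th) (trt : Th -> Th -> Th -> Th) (i : H -> Th) : Prop :=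
  (forall u v : H, brt (i u) (i v) = 0) /\
  (forall (u v : H) (z : Th),
     [/\ trt (i u) (i v) z = 0, trt (i u) z (i v) = 0 & trt z (i u) (i v) = 0]).

Definition ext_section (T Th : lmodType K) (al : T -> T) (alt : Th -> Th)
  (p : Th -> T) (sigma : T -> Th) : Prop :=
  [/\ lin_map sigma, (forall x, p (sigma x) = x) &
      (forall x, alt (sigma x) = sigma (al x))].

Definition cocycle23 (T V : lmodType K)
  (br : T -> T -> T) (tr : T -> T -> T -> T) (al : T -> T) (be : V -> V)
  (rho : T -> V -> V) (D theta : T -> T -> V -> V)
  (nu : T -> T -> V) (om : T -> T -> T -> V) : Prop :=
  bilin nu /\ trilin om /\
      (forall x1 x2, nu x1 x2 = - nu x2 x1) /\
      (forall x1 x2 x3, om x1 x2 x3 = - om x2 x1 x3) /\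
      (forall x1 x2, nu (al x1) (al x2) = be (nu x1 x2)) /\
      (forall x1 x2 x3, om (al x1) (al x2) (al x3) = be (om x1 x2 x3)) /\
      (forall x1 x2 x3,
         (om x1 x2 x3 - rho (al x1) (nu x2 x3) + nu (br x1 x2) (al x3))
       + (om x2 x3 x1 - rho (al x2) (nu x3 x1) + nu (br x2 x3) (al x1))
       + (om x3 x1 x2 - rho (al x3) (nu x1 x2) + nu (br x3 x1) (al x2)) = 0) /\
       (forall x1 x2 x3 y1,
         (theta (al x1) (al y1) (nu x2 x3) + om (br x1 x2) (al x3) (al y1))
       + (theta (al x2) (al y1) (nu x3 x1) + om (br x2 x3) (al x1) (al y1))
       + (theta (al x3) (al y1) (nu x1 x2) + om (br x3 x1) (al x2) (al y1)) = 0) /\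
       (forall x1 x2 y1 y2,
         om (al x1) (al x2) (br y1 y2) + D (al x1) (al x2) (nu y1 y2)
       = nu (tr x1 x2 y1) (al (al y2)) + nu (al (al y1)) (tr x1 x2 y2)
       + rho (al (al y1)) (om x1 x2 y2) - rho (al (al y2)) (om x1 x2 y1)) /\
       (forall x1 x2 y1 y2 y3,
         om (al (al x1)) (al (al x2)) (tr y1 y2 y3)
       + D (al (al x1)) (al (al x2)) (om y1 y2 y3)
       = om (tr x1 x2 y1) (al (al y2)) (al (al y3))
       + om (al (al y1)) (tr x1 x2 y2) (al (al y3))
       + om (al (al y1)) (al (al y2)) (tr x1 x2 y3)
       + theta (al (al y2)) (al (al y3)) (om x1 x2 y1)
       - theta (al (al y1)) (al (al y3)) (om x1 x2 y2)
       + D (al (al y1)) (al (al y2)) (om x1 x2 y3)).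

End HLY.

(* Main.v *)
Require Import Defs.
From mathcomp Require Import all_boot all_order all_algebra.
From Stdlib Require Import ClassicalEpsilon.
Import GRing.Theory.
Local Open Scope ring_scope.

Inductive zexp := ZAt of nat | ZAdd of zexp & zexp | ZOpp of zexp | Z0.
Fixpoint zcoef (e : zexp) (k : nat) : int :=
  match e with
  | ZAt n => if n == k then 1 else 0
  | ZAdd a b => zcoef a k + zcoef b k
  | ZOpp a => - zcoef a k
  | Z0 => 0 end.

Section ZS.
Variable V : zmodType.
Fixpoint zeval (env : seq V) (e : zexp) : V :=
  match e with
  | ZAt n => nth 0 env n
  | ZAdd a b => zeval env a + zeval env b
  | ZOpp a => - zeval env a
  | Z0 => 0 end.

Lemma zeval_sum env e :
  zeval env e = \sum_(0 <= k < size env) (nth 0 env k) *~ zcoef e k.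
Proof.
elim: e => [n|a iha b ihb|a iha|] /=.
- case: (ltnP n (size env)) => hn.
  + rewrite (@big_cat_nat _ _ _ n) //=; last exact: ltnW.
    rewrite (big_ltn hn) /= eqxx mulr1z.
    rewrite big1_seq ?add0r; last first.
      move=> k; rewrite mem_index_iota => /andP[_ hk].
      by rewrite (gtn_eqF hk) mulr0z.
    rewrite big1_seq ?addr0 // => k; rewrite mem_index_iota => /and3P[_ hk _].
    by rewrite (ltn_eqF hk) mulr0z.
  + rewrite nth_default // big1_seq // => k; rewrite mem_index_iota => /andP[_ hk].
    by rewrite (gtn_eqF (leq_trans hk hn)) mulr0z.
- by rewrite iha ihb -big_split /=; apply: eq_bigr => k _; rewrite mulrzDr.
- by rewrite iha -sumrN; apply: eq_bigr => k _; rewrite mulrNz.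
- by rewrite big1 // => k _; rewrite mulr0z.
Qed.

Lemma zeval_eq env e1 e2 N : size env = N ->
  all (fun k => zcoef e1 k == zcoef e2 k) (iota 0 N) ->
  zeval env e1 = zeval env e2.
Proof.
move=> <- /allP h; rewrite !zeval_sum; apply: eq_big_seq => k hk.
by rewrite (eqP (h k _)) //; move: hk; rewrite /index_iota subn0.
Qed.
End ZS.

Definition ZH (P : Prop) := P.
Lemma zh (V : zmodType) (a b : V) : a = b -> ZH (a - b = 0).
Proof. by move=> ->; rewrite subrr. Qed.
Lemma zh0 (V : zmodType) (a : V) : a = 0 -> ZH (a = 0).
Proof. by []. Qed.
Lemma zc_step (V : zmodType) (L R A : V) : ZH (A = 0) -> L = R + A -> L = R.
Proof. by rewrite /ZH => -> ->; rewrite addr0. Qed.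
Lemma zc_stepN (V : zmodType) (L R A : V) : ZH (A = 0) -> L = R - A -> L = R.
Proof. by rewrite /ZH => -> ->; rewrite subr0. Qed.

Arguments zc_step {V L R A}.
Arguments zc_stepN {V L R A}.
Arguments zh {V a b}.
Arguments zh0 {V a}.
Ltac zfind t env n :=
  lazymatch env with
  | nil => constr:(@None nat)
  | cons ?x ?r =>
      match constr:(tt) with
      | _ => let _ := constr:(ltac:(unify x t; exact I) : True) in constr:(Some n)
      | _ => zfind t r (S n)
      end
  end.
Ltac zappend env t :=
  lazymatch env with
  | nil => constr:(cons t env)
  | cons ?x ?r => let r' := zappend r t in constr:(cons x r')
  end.
Ltac zlen env := lazymatch env with nil => constr:(O) | cons _ ?r => let n := zlen r in constr:(S n) end.
Ltac zreify env t :=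
  lazymatch t with
  | (?a + ?b)%R =>
      let r1 := zreify env a in
      lazymatch r1 with pair ?e1 ?env1 =>
      let r2 := zreify env1 b in
      lazymatch r2 with pair ?e2 ?env2 => constr:((ZAdd e1 e2, env2)) end end
  | (- ?a)%R =>
      let r1 := zreify env a in
      lazymatch r1 with pair ?e1 ?env1 => constr:((ZOpp e1, env1)) end
  | 0%R => constr:((Z0, env))
  | _ =>
      let o := zfind t env O in
      lazymatch o with
      | Some ?n => constr:((ZAt n, env))
      | None => let n := zlen env in let env' := zappend env t in constr:((ZAt n, env'))
      end
  end.
Ltac zsolve :=
  lazymatch goal with |- @eq ?V ?l ?r =>
    let r1 := zreify (@nil V) l in
    lazymatch r1 with pair ?e1 ?env1 =>
    let r2 := zreify env1 r in
    lazymatch r2 with pair ?e2 ?env2 =>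
    let N := zlen env2 in
    change (@zeval V env2 e1 = @zeval V env2 e2);
    apply: (fun H1 H2 => @zeval_eq V env2 e1 e2 N H1 H2); [reflexivity | vm_compute; reflexivity]
  end end end.
Ltac zcs :=
  lazymatch goal with
  | H : ZH (_ = 0) |- _ =>
      first [ apply: (zc_step H); clear H; zcs | apply: (zc_stepN H); clear H; zcs ]
  | _ => zsolve
  end.


Section Lin.
Context {K : fieldType} {U V : lmodType K}.
Lemma lD {f : U -> V} : lin_map f -> forall x y, f (x + y) = f x + f y.
Proof. by move=> h x y; rewrite -{1}[x]scale1r h scale1r. Qed.
Lemma l0 {f : U -> V} : lin_map f -> f 0 = 0.
Proof.
move=> h; apply: (addrI (f 0)); rewrite -(lD h) !addr0 //.
Qed.
Lemma lN {f : U -> V} : lin_map f -> forall x, f (- x) = - f x.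
Proof. by move=> h x; have := h (-1) x 0; rewrite !addr0 (l0 h) addr0 !scaleN1r => ->. Qed.
Lemma lZ {f : U -> V} : lin_map f -> forall a x, f (a *: x) = a *: f x.
Proof. by move=> h a x; have := h a x 0; rewrite !addr0 (l0 h) addr0 => ->. Qed.
End Lin.

Theorem lemma4p4 (K : closedFieldType)
  (hK2 : 2%N \notin [pchar K]) (hK3 : 3%N \notin [pchar K])
  (T H Th : lmodType K)
  (br : T -> T -> T) (tr : T -> T -> T -> T) (al : T -> T)
  (brh : H -> H -> H) (trh : H -> H -> H -> H) (be : H -> H)
  (brt : Th -> Th -> Th) (trt : Th -> Th -> Th -> Th) (alt : Th -> Th)
  (i : H -> Th) (p : Th -> T) (sigma : T -> Th) :
  HLYA br tr al ->
  HLYA_extension br tr al brh trh be brt trt alt i p ->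
  abelian_ext brt trt i ->
  ext_section al alt p sigma ->
  let nu := fun x1 x2 => brt (sigma x1) (sigma x2) - sigma (br x1 x2) in
  let om := fun x1 x2 x3 =>
    trt (sigma x1) (sigma x2) (sigma x3) - sigma (tr x1 x2 x3) in
  exists (nuh : T -> T -> H) (omh : T -> T -> T -> H)
         (rho : T -> H -> H) (D theta : T -> T -> H -> H),
    (forall x1 x2, i (nuh x1 x2) = nu x1 x2) /\
    (forall x1 x2 x3, i (omh x1 x2 x3) = om x1 x2 x3) /\
    (forall x1 u, i (rho x1 u) = brt (sigma x1) (i u)) /\
    (forall x1 x2 u, i (D x1 x2 u) = trt (sigma x1) (sigma x2) (i u)) /\
    (forall x1 x2 u, i (theta x1 x2 u) = trt (i u) (sigma x1) (sigma x2)) /\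
    cocycle23 br tr al be rho D theta nuh omh.
Proof.
move=> HT Hext _ Hsec nu om.
case: HT => [allin [brbil [trtri [al1 [al2 [br1 [tr2 [br3 [tr4 [tr5 tr6]]]]]]]]]].
case: Hext => [_ [HTh [Hi [Hp [iinj [_ Hker]]]]]].
case: HTh => [altlin [brtbil [trttri [alt1 [alt2 [brt1 [trt2 [brt3 [trt4 [trt5 trt6]]]]]]]]]].
case: Hi => [ilin ial _ _].
case: Hp => [plin _ pbr ptr].
case: Hsec => [slin ps sal].
have iD := lD ilin; have iN := lN ilin; have iZ := lZ ilin; have i0 := l0 ilin.
have sD := lD slin; have sN := lN slin; have sZ := lZ slin; have s0 := l0 slin.
have pD := lD plin; have pN := lN plin.
have altD := lD altlin; have altN := lN altlin.
have brtD1 : forall a b c, brt (a + b) c = brt a c + brt b c :=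
  fun a b c => lD (brtbil.1 c) a b.
have brtN1 : forall a c, brt (- a) c = - brt a c := fun a c => lN (brtbil.1 c) a.
have brtZ1 : forall k a c, brt (k *: a) c = k *: brt a c := fun k a c => lZ (brtbil.1 c) k a.
have brtD2 : forall a b c, brt c (a + b) = brt c a + brt c b :=
  fun a b c => lD (brtbil.2 c) a b.
have brtN2 : forall a c, brt c (- a) = - brt c a := fun a c => lN (brtbil.2 c) a.
have brtZ2 : forall k a c, brt c (k *: a) = k *: brt c a := fun k a c => lZ (brtbil.2 c) k a.
have trtD1 : forall a b c d, trt (a + b) c d = trt a c d + trt b c d :=
  fun a b c d => lD (trttri.1 c d) a b.
have trtN1 : forall a c d, trt (- a) c d = - trt a c d := fun a c d => lN (trttri.1 c d) a.
have trtZ1 : forall k a c d, trt (k *: a) c d = k *: trt a c d := fun k a c d => lZ (trttri.1 c d) k a.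
have trtD2 : forall a b c d, trt c (a + b) d = trt c a d + trt c b d :=
  fun a b c d => lD (trttri.2.1 c d) a b.
have trtN2 : forall a c d, trt c (- a) d = - trt c a d := fun a c d => lN (trttri.2.1 c d) a.
have trtZ2 : forall k a c d, trt c (k *: a) d = k *: trt c a d := fun k a c d => lZ (trttri.2.1 c d) k a.
have trtD3 : forall a b c d, trt c d (a + b) = trt c d a + trt c d b :=
  fun a b c d => lD (trttri.2.2 c d) a b.
have trtN3 : forall a c d, trt c d (- a) = - trt c d a := fun a c d => lN (trttri.2.2 c d) a.
have trtZ3 : forall k a c d, trt c d (k *: a) = k *: trt c d a := fun k a c d => lZ (trttri.2.2 c d) k a.
have brD1 : forall a b c, br (a + b) c = br a c + br b c :=
  fun a b c => lD (brbil.1 c) a b.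
have brZ1 : forall k a c, br (k *: a) c = k *: br a c := fun k a c => lZ (brbil.1 c) k a.
have brD2 : forall a b c, br c (a + b) = br c a + br c b :=
  fun a b c => lD (brbil.2 c) a b.
have brZ2 : forall k a c, br c (k *: a) = k *: br c a := fun k a c => lZ (brbil.2 c) k a.
have trD1 : forall a b c d, tr (a + b) c d = tr a c d + tr b c d :=
  fun a b c d => lD (trtri.1 c d) a b.
have trZ1 : forall k a c d, tr (k *: a) c d = k *: tr a c d := fun k a c d => lZ (trtri.1 c d) k a.
have trD2 : forall a b c d, tr c (a + b) d = tr c a d + tr c b d :=
  fun a b c d => lD (trtri.2.1 c d) a b.
have trZ2 : forall k a c d, tr c (k *: a) d = k *: tr c a d := fun k a c d => lZ (trtri.2.1 c d) k a.
have trD3 : forall a b c d, tr c d (a + b) = tr c d a + tr c d b :=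
  fun a b c d => lD (trtri.2.2 c d) a b.
have trZ3 : forall k a c d, tr c d (k *: a) = k *: tr c d a := fun k a c d => lZ (trtri.2.2 c d) k a.
pose ii := fun y : Th => epsilon (inhabits (0 : H)) (fun u => i u = y).
have iiK : forall y, p y = 0 -> i (ii y) = y.
  move=> y /(Hker y).2 ex; exact: (epsilon_spec (inhabits (0 : H)) (fun u => i u = y) ex).
have pi0 : forall u, p (i u) = 0 by move=> u; apply/(Hker (i u)).1; exists u.
have Hn : forall x y, i (ii (nu x y)) = nu x y.
  by move=> x y; apply: iiK; rewrite /nu pD pN pbr !ps subrr.
have Ho : forall x y z, i (ii (om x y z)) = om x y z.
  by move=> x y z; apply: iiK; rewrite /om pD pN ptr !ps subrr.
have Hr : forall x u, i (ii (brt (sigma x) (i u))) = brt (sigma x) (i u).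
  by move=> x u; apply: iiK; rewrite pbr pi0 ps (l0 (brbil.2 x)).
have HD : forall x y u, i (ii (trt (sigma x) (sigma y) (i u))) = trt (sigma x) (sigma y) (i u).
  by move=> x y u; apply: iiK; rewrite ptr pi0 !ps (l0 (trtri.2.2 x y)).
have Hth : forall x y u, i (ii (trt (i u) (sigma x) (sigma y))) = trt (i u) (sigma x) (sigma y).
  move=> x y u; apply: iiK; rewrite ptr pi0 !ps.
  exact: (l0 (trtri.1 x y)).
exists (fun x y => ii (nu x y)), (fun x y z => ii (om x y z)),
  (fun x u => ii (brt (sigma x) (i u))),
  (fun x y u => ii (trt (sigma x) (sigma y) (i u))),
  (fun x y u => ii (trt (i u) (sigma x) (sigma y))).
do 5 (split; first by []).
split.
  split=> [y a x z | x a y z] /=; apply: iinj;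
  rewrite !(iD, iZ, Hn) /nu !(brD1, brZ1, brD2, brZ2, sD, sN, sZ, brtD1, brtN1, brtZ1, brtD2, brtN2, brtZ2, scalerDr, scalerN); zsolve.
split.
  split; [|split]=> [y w a x z | x w a y z | x y a z w] /=; apply: iinj;
  rewrite !(iD, iZ, Ho) /om !(trD1, trZ1, trD2, trZ2, trD3, trZ3, sD, sN, sZ, trtD1, trtN1, trtZ1, trtD2, trtN2, trtZ2, trtD3, trtN3, trtZ3, scalerDr, scalerN); zsolve.
split.
  move=> x y; apply: iinj; rewrite iN !Hn /nu.
  have h1 := zh0 (brt1 (sigma x) (sigma y)).
  have := congr1 sigma (br1 x y); rewrite sD s0 => /zh0 h2.
  apply: (zc_step h1);apply: (zc_stepN h2); zsolve.
split.
  move=> x y z; apply: iinj; rewrite iN !Ho /om.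
  have h1 := zh0 (trt2 (sigma x) (sigma y) (sigma z)).
  have := congr1 sigma (tr2 x y z); rewrite sD s0 => /zh0 h2.
  apply: (zc_step h1);apply: (zc_stepN h2); zsolve.
split.
  move=> x y; apply: iinj; rewrite ial !Hn /nu altD altN alt1 !sal al1; zsolve.
split.
  move=> x y z; apply: iinj; rewrite ial !Ho /om altD altN alt2 !sal al2; zsolve.
split.
  move=> x1 x2 x3 /=; apply: iinj; rewrite !(iD, iN, iZ, ial, i0); rewrite ?Hr ?HD ?Hth; rewrite ?Hn ?Ho /nu /om !(brtD1, brtN1, brtD2, brtN2, trtD1, trtN1, trtD2, trtN2, trtD3, trtN3, sal).
  have := brt3 (sigma x1) (sigma x2) (sigma x3); rewrite !sal => /zh0 h1.
  have := congr1 sigma (br3 x1 x2 x3); rewrite !sD s0 => /zh0 h2.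
  have a1 := zh0 (brt1 (sigma (al x1)) (sigma (br x2 x3))).
  have a2 := zh0 (brt1 (sigma (al x2)) (sigma (br x3 x1))).
  have a3 := zh0 (brt1 (sigma (al x3)) (sigma (br x1 x2))).
  have b1 := zh0 (brt1 (sigma (al x1)) (brt (sigma x2) (sigma x3))).
  have b2 := zh0 (brt1 (sigma (al x2)) (brt (sigma x3) (sigma x1))).
  have b3 := zh0 (brt1 (sigma (al x3)) (brt (sigma x1) (sigma x2))).
  apply: (zc_step h1);apply: (zc_stepN h2);apply: (zc_step a1);apply: (zc_step a2);apply: (zc_step a3);apply: (zc_stepN b1);apply: (zc_stepN b2);apply: (zc_stepN b3); zsolve.
split.
  move=> x1 x2 x3 y1 /=; apply: iinj; rewrite !(iD, iN, iZ, ial, i0); rewrite ?Hr ?HD ?Hth; rewrite ?Hn ?Ho /nu /om !(brtD1, brtN1, brtD2, brtN2, trtD1, trtN1, trtD2, trtN2, trtD3, trtN3, sal).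
  have := trt4 (sigma x1) (sigma x2) (sigma x3) (sigma y1); rewrite !sal => /zh0 h1.
  have := congr1 sigma (tr4 x1 x2 x3 y1); rewrite !sD s0 => /zh0 h2.
  apply: (zc_step h1);apply: (zc_stepN h2); zsolve.
split.
  move=> x1 x2 y1 y2 /=; apply: iinj; rewrite !(iD, iN, iZ, ial, i0); rewrite ?Hr ?HD ?Hth; rewrite ?Hn ?Ho /nu /om !(brtD1, brtN1, brtD2, brtN2, trtD1, trtN1, trtD2, trtN2, trtD3, trtN3, sal).
  have := trt5 (sigma x1) (sigma x2) (sigma y1) (sigma y2); rewrite !sal => /zh h1.
  have := congr1 sigma (tr5 x1 x2 y1 y2); rewrite !sD => /zh h2.
  have a1 := zh0 (brt1 (sigma (al (al y2))) (trt (sigma x1) (sigma x2) (sigma y1))).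
  have a2 := zh0 (brt1 (sigma (al (al y2))) (sigma (tr x1 x2 y1))).
  apply: (zc_step h1);apply: (zc_stepN h2);apply: (zc_step a1);apply: (zc_stepN a2); zsolve.
move=> x1 x2 y1 y2 y3 /=; apply: iinj; rewrite !(iD, iN, iZ, ial, i0); rewrite ?Hr ?HD ?Hth; rewrite ?Hn ?Ho /nu /om !(brtD1, brtN1, brtD2, brtN2, trtD1, trtN1, trtD2, trtN2, trtD3, trtN3, sal).
have := trt6 (sigma x1) (sigma x2) (sigma y1) (sigma y2) (sigma y3); rewrite !sal => /zh h1.
have := congr1 sigma (tr6 x1 x2 y1 y2 y3); rewrite !sD => /zh h2.
have a1 := zh0 (trt2 (trt (sigma x1) (sigma x2) (sigma y2)) (sigma (al (al y1))) (sigma (al (al y3)))).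
have a2 := zh0 (trt2 (sigma (tr x1 x2 y2)) (sigma (al (al y1))) (sigma (al (al y3)))).
apply: (zc_step h1);apply: (zc_stepN h2);apply: (zc_step a1);apply: (zc_stepN a2); zsolve.
Qed.
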